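(* Let $k\ge 1$ and $N=2^{k+1}$. There exist a finite field $\mathbb{F}_q$ of order $q\ge 2k+3$ and explicit constants $a_i,b_i\in\mathbb{F}_q$ with $a_i^2-b_i^2=-1$ for all $i\in\{1,\ldots,k\}$, such that the $(k+2,k)$ storage code with coding matrices $\mathbf{A}_i=a_i\mathbf{X}_i+b_i\mathbf{X}_{k+1}+\mathbf{I}_N$ ($i=1,\ldots,k$) is a repair optimal MDS storage code; that is: (1) (MDS) for every choice of $k$ of the $k+2$ nodes, the file $\mathbf{f}$ is uniquely determined by (computable from) the contents of those $k$ nodes; and (2) (optimal repair) for every single node (systematic or parity), the contents of that node can be exactly recovered from a total of $(k+1)\frac{N}{2}$ downloaded symbols, namely $\frac{N}{2}$ $\mathbb{F}_q$-linear combinations of the stored contents of each of the other $k+1$ nodes.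
   Context: All arithmetic is over a finite field $\mathbb{F}_q$; $-1$ denotes the field element $q-1$. A file $\mathbf{f}\in\mathbb{F}_q^{kN}$ is partitioned as $\mathbf{f}=[\mathbf{f}_1^T\ \cdots\ \mathbf{f}_k^T]^T$ with each $\mathbf{f}_i\in\mathbb{F}_q^N$. The $(k+2,k)$ storage code with $N\times N$ coding matrices $\mathbf{A}_1,\ldots,\mathbf{A}_k$ consists of $k+2$ nodes, each storing $N$ symbols: systematic node $i\in\{1,\ldots,k\}$ stores $\mathbf{f}_i$; the first parity node stores $\mathbf{f}_1+\cdots+\mathbf{f}_k$; the second parity node stores $\mathbf{A}_1^T\mathbf{f}_1+\cdots+\mathbf{A}_k^T\mathbf{f}_k$. For $i\in\{1,\ldots,k+1\}$, $\mathbf{X}_i=\mathbf{I}_{2^{i-1}}\otimes\mathrm{blkdiag}\big(\mathbf{I}_{N/2^i},-\mathbf{I}_{N/2^i}\big)$, an $N\times N$ diagonal matrix with entries $\pm1$; $\otimes$ is the Kronecker product and $\mathbf{I}_r$ the $r\times r$ identity. (The value $(k+1)\frac{N}{2}$ is the known information-theoretic minimum repair bandwidth for a single node of a $(k+2,k)$ MDS code storing $N$ symbols per node.) *)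

(* Defs.v *)
From HB Require Import structures.
From mathcomp Require Import all_boot all_order all_algebra all_field.
Set Implicit Arguments. Unset Strict Implicit. Unset Printing Implicit Defensive.
Import Order.TTheory GRing.Theory.
Local Open Scope ring_scope.

Definition Nlen (k : nat) : nat := 2 ^ k.+1.

(* X_i = I_{2^{i-1}} (x) blkdiag(I_{N/2^i}, -I_{N/2^i}), written entrywise:
   the j-th diagonal entry (0-based) is -1 iff floor(j / (N/2^i)) is odd. *)
Definition Xmat (F : fieldType) (k i : nat) : 'M[F]_(Nlen k) :=
  diag_mx (\row_(j < Nlen k)
             (if odd (j %/ (Nlen k %/ 2 ^ i)) then -1 else 1)).

(* Coding matrices A_i = a_i X_i + b_i X_{k+1} + I_N, for i = 1..k
   (index i : 'I_k stands for i+1). *)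
Definition Acode (F : fieldType) (k : nat) (a b : 'I_k -> F) (i : 'I_k)
  : 'M[F]_(Nlen k) :=
  a i *: Xmat F k i.+1 + b i *: Xmat F k k.+1 + 1%:M.

(* Content of node j of the (k+2,k) code with coding matrices A, storing the
   file f = [f_1; ...; f_k]: nodes 0..k-1 are systematic (node i stores f_i),
   node k is the first parity (sum f_i), node k+1 the second parity
   (sum A_i^T f_i). *)
Definition node_content (F : fieldType) (k n : nat) (A : 'I_k -> 'M[F]_n)
  (f : 'I_k -> 'cV[F]_n) (j : 'I_(k.+2)) : 'cV[F]_n :=
  match (insub (val j) : option 'I_k) with
  | Some i => f i
  | None => if val j == k then \sum_(i < k) f i
            else \sum_(i < k) (A i)^T *m f i
  end.

Definition is_MDS (F : fieldType) (k n : nat) (A : 'I_k -> 'M[F]_n) : Prop :=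
  forall S : {set 'I_(k.+2)}, #|S| = k ->
  forall f g : 'I_k -> 'cV[F]_n,
    (forall j, j \in S -> node_content A f j = node_content A g j) -> f = g.

Definition repairable_with (F : fieldType) (k n d : nat)
  (A : 'I_k -> 'M[F]_n) : Prop :=
  forall j : 'I_(k.+2),
  exists S : 'I_(k.+2) -> 'M[F]_(d, n),
  exists rec : ('I_(k.+2) -> 'cV[F]_d) -> 'cV[F]_n,
  forall f : 'I_k -> 'cV[F]_n,
    rec (fun l => if l == j then 0 else S l *m node_content A f l)
    = node_content A f j.

(* Main.v *)
Require Import Defs.
From HB Require Import structures.
From mathcomp Require Import all_boot all_order all_algebra all_field.
From mathcomp Require Import zify ring.
From Stdlib Require Import FunctionalExtensionality.
Import Order.TTheory GRing.Theory.

Module Mt1.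
Import Order.TTheory GRing.Theory.




Lemma bit_gen H c L p e : (L < 2^p)%N -> (c <= 1)%N ->
  odd ((H * 2^p.+1 + c * 2^p + L) %/ 2^e) =
  if (e < p)%N then odd (L %/ 2^e) else if e == p then odd c else odd (H %/ 2^(e - p.+1)).
Proof.
move=> hL hc.
case: (ltngtP e p) => hep.
- have E1 : (2^p.+1 = 2^(p.+1 - e) * 2^e)%N by rewrite -expnD subnK // ltnW // ltnS ltnW.
  have E2 : (2^p = 2^(p - e) * 2^e)%N by rewrite -expnD subnK // ltnW.
  rewrite E1 E2 mulnA mulnA -mulnDl divnMDl ?expn_gt0 // !oddD !oddM !oddX.
  have -> : (p.+1 - e == 0)%N = false by lia.
  have -> : (p - e == 0)%N = false by lia.
  by rewrite /= !andbF.
- have E : (2^e = 2^p.+1 * 2^(e - p.+1))%N by rewrite -expnD subnKC.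
  rewrite E divnMA -addnA divnMDl ?expn_gt0 // (divn_small (m:= c * 2^p + L)) ?addn0 //.
  rewrite expnS; case: c hc => [|[|//]] _; lia.
- subst e. rewrite expnS mulnA -addnA.
  have -> : (H * 2 * 2 ^ p + (c * 2 ^ p + L) = (H * 2 + c) * 2^p + L)%N by rewrite mulnDl addnA.
  rewrite divnMDl ?expn_gt0 // divn_small // addn0 oddD oddM /=. by rewrite andbF.
Qed.

End Mt1.
Import Mt1.

Module Mt2.
Import Order.TTheory GRing.Theory.

Lemma bit_compl n y e : (y < 2^n)%N -> (e < n)%N ->
  odd ((2^n - 1 - y) %/ 2^e) = ~~ odd (y %/ 2^e).
Proof.
move=> hy he.
have En : (2^n = 2^(n - e) * 2^e)%N by rewrite -expnD subnK // ltnW.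
set P := (2^(n - e))%N. set Q := (2^e)%N.
have hQ : (0 < Q)%N by rewrite expn_gt0.
have hP : (2 <= P)%N.
  by rewrite /P -{1}(expn1 2) leq_exp2l // subn_gt0.
have Ey := divn_eq y Q.
set Y := (y %/ Q)%N in Ey *. set R := (y %% Q)%N in Ey *.
have hR : (R < Q)%N by rewrite ltn_mod.
have hY : (Y < P)%N by rewrite ltn_divLR // -En.
have -> : (2^n - 1 - y = (P - 1 - Y) * Q + (Q - 1 - R))%N.
  rewrite En Ey.
  have [Z hZ] : exists Z, P = (Y + 1 + Z)%N by exists (P - 1 - Y)%N; lia.
  rewrite -/P -/Q hZ (_ : (Y + 1 + Z - 1 - Y = Z)%N); last by lia.
  rewrite !mulnDl mul1n. lia.
rewrite divnMDl // divn_small ?addn0; last by lia.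
rewrite -subnDA oddB; last by lia.
rewrite /P oddX oddD /=.
have -> : (n - e == 0)%N = false by lia.
by case: (odd Y).
Qed.

End Mt2.
Import Mt2.

Module Mt3.
Import Order.TTheory GRing.Theory.
Local Open Scope ring_scope.
Set Implicit Arguments. Unset Strict Implicit.

Section Gen.
Variable F : fieldType.
Variable k : nat.

Definition sysn (l : 'I_k) : 'I_k.+2 := widen_ord (leq_trans (leqnSn k) (leqnSn k.+1)) l.
Definition p1 : 'I_k.+2 := Ordinal (leqnSn k.+1).
Definition p2 : 'I_k.+2 := ord_max.

Lemma sysn_eq l m : (sysn l == sysn m) = (l == m).
Proof. by apply/eqP/eqP => [/(congr1 val) /= /val_inj|->]. Qed.
Lemma sysn_p1 l : (sysn l == p1) = false.
Proof. by apply/negbTE; rewrite -val_eqE /= neq_ltn ltn_ord. Qed.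
Lemma sysn_p2 l : (sysn l == p2) = false.
Proof. by apply/negbTE; rewrite -val_eqE /= neq_ltn ltnS ltnW. Qed.
Lemma p1_p2 : (p1 == p2) = false.
Proof. by apply/negbTE; rewrite -val_eqE /= neq_ltn ltnSn. Qed.

Lemma nodeP (j : 'I_k.+2) : (exists l, j = sysn l) \/ j = p1 \/ j = p2.
Proof.
case: (ltnP (val j) k) => h.
  by left; exists (Ordinal h); apply: val_inj.
right; have := ltn_ord j; rewrite ltnS leq_eqVlt ltnS => /orP [/eqP e | h2].
  by right; apply: val_inj; rewrite /= e.
by left; apply: val_inj; apply/eqP; rewrite /= eqn_leq h h2.
Qed.

Variables (n : nat) (A : 'I_k -> 'M[F]_n) (f : 'I_k -> 'cV[F]_n).

Lemma nc_sys l : node_content A f (sysn l) = f l.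
Proof.
rewrite /node_content; case: insubP => [i' _ hi|]; last by rewrite /= ltn_ord.
by congr (f _); apply: val_inj; rewrite hi.
Qed.
Lemma nc_p1 : node_content A f p1 = \sum_(i < k) f i.
Proof.
by rewrite /node_content; case: insubP => [i' /=|]; [rewrite ltnn | rewrite /= eqxx].
Qed.
Lemma nc_p2 : node_content A f p2 = \sum_(i < k) (A i)^T *m f i.
Proof.
rewrite /node_content; case: insubP => [i' /=|]; first by rewrite ltnNge leqnSn.
by rewrite /= (_ : (k.+1 == k) = false) //; lia.
Qed.
End Gen.
Arguments p1 {k}. Arguments p2 {k}.

Lemma sum_delta (F : fieldType) n (x : 'I_n) (G : 'I_n -> F) :
  \sum_r (r == x)%:R * G r = G x.
Proof.
rewrite (bigD1 x) //= eqxx mul1r big1 ?addr0 // => r /negbTE ->; by rewrite mul0r.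
Qed.

Lemma gen_repair (F : fieldType) k (n M : nat) (A : 'I_k -> 'M[F]_n) (j : 'I_k.+2)
  (r0 r1 : 'I_M -> 'I_n) (u v : 'I_k.+2 -> 'I_M -> F)
  (Y0 Y1 : ('I_k.+2 -> 'I_M -> F) -> 'I_M -> F) :
  (forall r, exists q, r = r0 q \/ r = r1 q) ->
  (forall f D q, (forall l q, D l q = if l == j then 0 else
        u l q * node_content A f l (r0 q) 0 + v l q * node_content A f l (r1 q) 0) ->
     Y0 D q = node_content A f j (r0 q) 0 /\ Y1 D q = node_content A f j (r1 q) 0) ->
  exists S : 'I_k.+2 -> 'M[F]_(M, n),
  exists rec : ('I_k.+2 -> 'cV[F]_M) -> 'cV[F]_n,
  forall f, rec (fun l => if l == j then 0 else S l *m node_content A f l)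
            = node_content A f j.
Proof.
move=> cov HY.
pose S := (fun l => \matrix_(q, r) (u l q * (r == r0 q)%:R + v l q * (r == r1 q)%:R)).
exists S.
exists (fun X => \col_r (match [pick q | r == r0 q] with
   | Some q => Y0 (fun l q => X l q 0) q
   | None => match [pick q | r == r1 q] with
             | Some q => Y1 (fun l q => X l q 0) q | None => 0 end end)).
move=> f; apply/matrixP => r c; rewrite (ord1 c) mxE.
pose D := fun l q => (if l == j then 0 else S l *m node_content A f l) q 0.
have HD : forall l q, D l q = if l == j then 0 else
        u l q * node_content A f l (r0 q) 0 + v l q * node_content A f l (r1 q) 0.
  move=> l q; rewrite /D; case: (l == j); first by rewrite mxE.
  rewrite mxE; under eq_bigr do rewrite mxE mulrDl -!mulrA.
  by rewrite big_split /= -!mulr_sumr !sum_delta.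
case: pickP => [q /eqP -> | h0].
  exact: (proj1 (HY f D q HD)).
case: pickP => [q /eqP -> | h1].
  exact: (proj2 (HY f D q HD)).
by case: (cov r) => q [] /eqP; rewrite ?h0 ?h1.
Qed.

End Mt3.
Import Mt3.

Module Mt4.
Import Order.TTheory GRing.Theory.
Local Open Scope ring_scope.

Definition sg (F : fieldType) (s : bool) : F := if s then -1 else 1.
Definition bit (r e : nat) := odd (r %/ 2^e).
Definition xe {F : fieldType} {k} (a b : 'I_k -> F) (i : 'I_k) (r : nat) : F :=
  a i * sg F (bit r (k - i)) + b i * sg F (bit r 0) + 1.

Lemma Nlen_div k m : (m <= k.+1)%N -> (Nlen k %/ 2 ^ m = 2 ^ (k.+1 - m))%N.
Proof. by move=> h; rewrite /Nlen expnB. Qed.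

Lemma Acode_diag (F : fieldType) k (a b : 'I_k -> F) i :
  Acode a b i = diag_mx (\row_(r < Nlen k) xe a b i r).
Proof.
apply/matrixP => r s; rewrite /Acode /Xmat !mxE.
rewrite !Nlen_div ?subnn ?subSS // ?ltnS 1?ltnW //.
by case: (r == s); rewrite /= ?mulr1n ?mulr0n ?mulr0 ?addr0.
Qed.

Lemma Atmul (F : fieldType) k (a b : 'I_k -> F) i (v : 'cV[F]_(Nlen k)) r :
  ((Acode a b i)^T *m v) r 0 = xe a b i r * v r 0.
Proof. by rewrite Acode_diag tr_diag_mx mul_diag_mx !mxE. Qed.

End Mt4.
Import Mt4.

Module Mt5.
Import Order.TTheory GRing.Theory.
Local Open Scope ring_scope.

Lemma sum1 (F : fieldType) k (G : 'I_k -> F) l :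
  (forall m, m != l -> G m = 0) -> \sum_m G m = G l.
Proof. by move=> h; rewrite (bigD1 l) //= big1 ?addr0. Qed.

Lemma sum2 (F : fieldType) k (G : 'I_k -> F) l m : l != m ->
  (forall m', m' != l -> m' != m -> G m' = 0) -> \sum_i G i = G l + G m.
Proof.
move=> hlm h; rewrite (bigD1 l) //= (bigD1 m) 1?eq_sym //= big1 ?addr0 //.
by move=> i /andP [h1 h2]; apply: h.
Qed.

Section MDS.
Variables (F : fieldType) (k : nat) (a b : 'I_k -> F).
Hypothesis hx : forall i r, xe a b i r != 0.
Hypothesis hd : forall i j r, i != j -> xe a b i r != xe a b j r.

Lemma mds : is_MDS (Acode a b).
Proof.
move=> S hS f g hfg.
have hC : #|~: S| == 2%N by apply/eqP; move: (cardsC S); rewrite card_ord hS; lia.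
case/cards2P: hC => c1 [c2 [hc12 hC]].
have inS : forall j, j != c1 -> j != c2 -> j \in S.
  by move=> j h1 h2; rewrite -[j \in S]negbK -in_setC hC !inE negb_or h1 h2.
apply: functional_extensionality => l; apply/matrixP => r z; rewrite (ord1 z).
pose d m := f m r 0 - g m r 0.
have Fs : forall m, sysn m \in S -> d m = 0.
  by move=> m /hfg; rewrite !nc_sys /d => ->; rewrite subrr.
have F1 : p1 \in S -> \sum_m d m = 0.
  move=> /hfg; rewrite !nc_p1 => /(congr1 (fun M : 'cV[F]_(Nlen k) => M r 0)); rewrite !summxE => e.
  by rewrite sumrB e subrr.
have F2 : p2 \in S -> \sum_m xe a b m r * d m = 0.
  move=> /hfg; rewrite !nc_p2 => /(congr1 (fun M : 'cV[F]_(Nlen k) => M r 0)); rewrite !summxE.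
  under eq_bigr do rewrite Atmul. under [in RHS]eq_bigr do rewrite Atmul. move=> e.
  by under eq_bigr do rewrite mulrBr; rewrite sumrB e subrr.
apply/eqP; rewrite -subr_eq0 -/(d l); apply/eqP.
case hl: (sysn l \in S); first exact: Fs.
have [c [hcl hc]] : exists c, c != sysn l /\ (forall j, j != sysn l -> j != c -> j \in S).
  case: (eqVneq (sysn l) c1) => e1.
    exists c2; split; first by rewrite e1 eq_sym.
    by move=> j; rewrite e1 => h1 h2; apply: inS.
  case: (eqVneq (sysn l) c2) => e2.
    exists c1; split; first by rewrite e2.
    by move=> j; rewrite e2 => h1 h2; apply: inS.
  by rewrite inS in hl.
have other : forall m, m != l -> sysn m != c -> d m = 0.
  by move=> m h1 h2; apply: Fs; apply: hc => //; rewrite sysn_eq.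
case: (nodeP c) => [[m ->] | [-> | ->]] in hcl hc other *.
- have hml : m != l by move: hcl; rewrite sysn_eq.
  have p1S : p1 \in S by apply: hc; rewrite eq_sym sysn_p1.
  have p2S : p2 \in S by apply: hc; rewrite eq_sym sysn_p2.
  have e1 := F1 p1S.
  rewrite (@sum2 _ _ _ l m) in e1; last 2 first.
  - by rewrite eq_sym.
  - by move=> m' h1 h2; apply: other; rewrite ?sysn_eq.
  have e2 := F2 p2S.
  rewrite (@sum2 _ _ _ l m) in e2; last 2 first.
  - by rewrite eq_sym.
  - by move=> m' h1 h2; rewrite other ?sysn_eq ?mulr0.
  have edm : d m = - d l by apply/eqP; rewrite -addr_eq0 addrC e1.
  rewrite edm mulrN -mulNr -mulrDl in e2.
  move/eqP: e2; rewrite mulf_eq0 => /orP [|/eqP //].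
  have hlm : l != m by rewrite eq_sym.
  by rewrite subr_eq0 (negbTE (hd l m r hlm)).
- have p2S : p2 \in S by apply: hc; rewrite eq_sym ?sysn_p2 ?p1_p2.
  have e2 := F2 p2S.
  rewrite (@sum1 _ _ _ l) in e2; last first.
    by move=> m' h1; rewrite other ?sysn_p1 ?mulr0.
  by move/eqP: e2; rewrite mulf_eq0 (negbTE (hx _ _)) => /eqP.
- have p1S : p1 \in S by apply: hc; rewrite ?p1_p2 // eq_sym sysn_p1.
  have e1 := F1 p1S.
  rewrite (@sum1 _ _ _ l) in e1 => //.
  by move=> m' h1; rewrite other ?sysn_p2.
Qed.
End MDS.

End Mt5.
Import Mt5.

Module Mt6.
Import Order.TTheory GRing.Theory.

Definition ins (c p q : nat) := (q %/ 2^p * 2^p.+1 + c * 2^p + q %% 2^p)%N.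

Lemma ins_bit c p q e : (c <= 1)%N -> e != p -> bit (ins c p q) e = bit (ins 0 p q) e.
Proof.
move=> hc he; rewrite /bit /ins !bit_gen ?ltn_mod ?expn_gt0 //.
by rewrite (negbTE he).
Qed.

Lemma ins_bitp c p q : (c <= 1)%N -> bit (ins c p q) p = odd c.
Proof. by move=> hc; rewrite /bit /ins bit_gen ?ltn_mod ?expn_gt0 // ltnn eqxx. Qed.

Lemma ins_lt k c p q : (q < 2^k)%N -> (c <= 1)%N -> (p <= k)%N -> (ins c p q < 2^k.+1)%N.
Proof.
move=> hq hc hp; rewrite /ins.
have Ek : (2^k = 2^(k - p) * 2^p)%N by rewrite -expnD subnK.
have hH : (q %/ 2^p < 2^(k - p))%N by rewrite ltn_divLR ?expn_gt0 // -Ek.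
have hL : (q %% 2^p < 2^p)%N by rewrite ltn_mod expn_gt0.
have h1 : ((q %/ 2^p).+1 * 2^p <= 2^(k-p) * 2^p)%N by rewrite leq_mul2r hH orbT.
rewrite -Ek mulSnr in h1.
have h2 : (c * 2^p <= 2^p)%N by case: c hc => [|[|]] // _; rewrite mul1n.
rewrite !expnS mulnCA; lia.
Qed.

Lemma ins_cover k p r : (p <= k)%N -> (r < 2^k.+1)%N ->
  exists q, (q < 2^k)%N /\ (r = ins 0 p q \/ r = ins 1 p q).
Proof.
move=> hp hr.
have Ek : (2^k = 2^(k - p) * 2^p)%N by rewrite -expnD subnK.
have Ek1 : (2^k.+1 = 2^(k - p) * 2^p.+1)%N by rewrite !expnS Ek mulnCA.
have hP : (0 < 2^p)%N by rewrite expn_gt0.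
set H := (r %/ 2^p.+1)%N. set R := (r %% 2^p.+1)%N.
have Er : r = (H * 2^p.+1 + R)%N by rewrite /H /R -divn_eq.
have hH : (H < 2^(k - p))%N by rewrite ltn_divLR ?expn_gt0 // -Ek1.
have hR : (R < 2 * 2^p)%N by rewrite -expnS ltn_mod expn_gt0.
have key : forall L, (L < 2^p)%N -> ((H * 2^p + L) %/ 2^p = H /\ (H * 2^p + L) %% 2^p = L)%N.
  move=> L hL; split; first by rewrite divnMDl // divn_small ?addn0.
  by rewrite modnMDl modn_small.
have hq : forall L, (L < 2^p)%N -> (H * 2^p + L < 2^k)%N.
  move=> L hL; have : (H.+1 * 2^p <= 2^(k-p) * 2^p)%N by rewrite leq_mul2r hH orbT.
  rewrite mulSnr -Ek; lia.
case: (ltnP R (2^p)) => hRp.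
  exists (H * 2^p + R)%N; split; first exact: hq.
  by left; rewrite /ins; case: (key R hRp) => -> ->; rewrite mul0n addn0.
have hL : (R - 2^p < 2^p)%N by lia.
exists (H * 2^p + (R - 2^p))%N; split; first exact: hq.
by right; rewrite /ins; case: (key _ hL) => -> ->; rewrite mul1n Er; lia.
Qed.

Definition cp1 k q := (2^k.+1 - 1 - q)%N.

Lemma cp1_bit k q e : (q < 2^k.+1)%N -> (e <= k)%N -> bit (cp1 k q) e = ~~ bit q e.
Proof. by move=> hq he; rewrite /bit /cp1 bit_compl. Qed.

Lemma cp1_lt k q : (cp1 k q < 2^k.+1)%N.
Proof. have := expn_gt0 2 k.+1; rewrite /cp1; lia. Qed.

Lemma cp1_cover k r : (r < 2^k.+1)%N -> exists q, (q < 2^k)%N /\ (r = q \/ r = cp1 k q).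
Proof.
move=> hr; case: (ltnP r (2^k)) => h.
  by exists r; split => //; left.
exists (cp1 k r); move: hr h; rewrite /cp1 expnS => hr h; split; first lia.
by right; lia.
Qed.

Definition cp2 k q := ((2^k - 1 - q %/ 2) * 2 + q %% 2)%N.

Lemma div2S x e : (x %/ 2^e.+1 = (x %/ 2) %/ 2^e)%N.
Proof. by rewrite expnS divnMA. Qed.

Lemma cp2_bit k q e : (q < 2^k.+1)%N -> (1 <= e <= k)%N -> bit (cp2 k q) e = ~~ bit q e.
Proof.
move=> hq /andP [he1 he2]; case: e he1 he2 => // e _ he.
rewrite /bit /cp2 !div2S divnMDl // (divn_small (ltn_mod q 2)) addn0 bit_compl //.
by rewrite ltn_divLR // -expnSr.
Qed.

Lemma cp2_bit0 k q : bit (cp2 k q) 0 = bit q 0.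
Proof.
rewrite /bit /cp2 expn0 !divn1 oddD oddM /= andbF /=.
by rewrite {2}(divn_eq q 2) oddD oddM /= andbF.
Qed.

Lemma cp2_lt k q : (cp2 k q < 2^k.+1)%N.
Proof.
rewrite /cp2 expnS; have := expn_gt0 2 k; have := ltn_mod q 2; lia.
Qed.

Lemma cp2_cover k r : (1 <= k)%N -> (r < 2^k.+1)%N ->
  exists q, (q < 2^k)%N /\ (r = q \/ r = cp2 k q).
Proof.
move=> hk hr; case: (ltnP r (2^k)) => h.
  by exists r; split => //; left.
have EK : (2^k = 2 * 2^k.-1)%N by rewrite -expnS prednK.
set Y := (r %/ 2)%N. set R := (r %% 2)%N.
have Er : r = (Y * 2 + R)%N by rewrite /Y /R -divn_eq.
have hR : (R < 2)%N by rewrite ltn_mod.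
exists (cp2 k r); split.
  rewrite /cp2 -/Y -/R; move: hr h; rewrite expnS EK; lia.
right; rewrite /cp2 -/Y -/R.
have hY : (Y < 2^k)%N by rewrite ltn_divLR // -expnSr.
rewrite divnMDl // divn_small // addn0 modnMDl modn_small //.
lia.
Qed.

End Mt6.
Import Mt6.

Module Mt7.
Import Order.TTheory GRing.Theory.
Local Open Scope ring_scope.

Lemma p2_p1 k : (@p2 k == p1) = false. Proof. by rewrite eq_sym p1_p2. Qed.

Lemma p1_sysn k (l : 'I_k) : (p1 == sysn l) = false. Proof. by rewrite eq_sym sysn_p1. Qed.
Lemma p2_sysn k (l : 'I_k) : (p2 == sysn l) = false. Proof. by rewrite eq_sym sysn_p2. Qed.

Definition sel {F : fieldType} {k} (l : 'I_k.+2) (g : 'I_k -> F) (d : F) : F :=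
  if (insub (val l) : option 'I_k) is Some m then g m else d.
Lemma sel_sys (F : fieldType) k l (g : 'I_k -> F) d : sel (sysn l) g d = g l.
Proof.
rewrite /sel; case: insubP => [i' _ hi|]; last by rewrite /= ltn_ord.
by congr (g _); apply: val_inj; rewrite hi.
Qed.
Lemma sel_p1 (F : fieldType) k (g : 'I_k -> F) d : sel p1 g d = d.
Proof. by rewrite /sel; case: insubP => [i' /=|]; [rewrite ltnn|]. Qed.
Lemma sel_p2 (F : fieldType) k (g : 'I_k -> F) d : sel p2 g d = d.
Proof. by rewrite /sel; case: insubP => [i' /=|] //; rewrite ltnNge leqnSn. Qed.

Section Rep.
Variables (F : fieldType) (k : nat) (a b : 'I_k -> F).
Hypothesis h2 : (2 : F) != 0.
Hypothesis hab : forall i, a i ^+ 2 - b i ^+ 2 = -1.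
Hypothesis ha : forall i, a i != 0.
Hypothesis hx : forall i r, xe a b i r != 0.
Hypothesis hk : (1 <= k)%N.

Let A := Acode a b.

Lemma ncE_sys f l (r : 'I_(Nlen k)) : node_content A f (sysn l) r 0 = f l r 0.
Proof. by rewrite nc_sys. Qed.
Lemma ncE_p1 f (r : 'I_(Nlen k)) : node_content A f p1 r 0 = \sum_l f l r 0.
Proof. by rewrite nc_p1 summxE. Qed.
Lemma ncE_p2 f (r : 'I_(Nlen k)) : node_content A f p2 r 0 = \sum_l xe a b l r * f l r 0.
Proof. by rewrite nc_p2 summxE; apply: eq_bigr => l _; rewrite Atmul. Qed.

Lemma sum_diff (G H : 'I_k -> F) i : (forall l, l != i -> G l = H l) ->
  \sum_l G l - \sum_l H l = G i - H i.
Proof.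
move=> h; rewrite (bigD1 i) //= [X in _ - X](bigD1 i) //=.
rewrite (eq_bigr H); last by move=> l /h.
by rewrite opprD addrACA subrr addr0.
Qed.

Lemma sg_neg s : sg F (~~ s) = - sg F s.
Proof. by case: s; rewrite /sg /= ?opprK. Qed.

Definition sr0 (i : 'I_k) (q : 'I_(2^k)) : 'I_(Nlen k) :=
  Ordinal (@ins_lt k 0 (k - i) q (ltn_ord q) isT (leq_subr i k)).
Definition sr1 (i : 'I_k) (q : 'I_(2^k)) : 'I_(Nlen k) :=
  Ordinal (@ins_lt k 1 (k - i) q (ltn_ord q) isT (leq_subr i k)).

Lemma rep_sys i : exists S : 'I_k.+2 -> 'M[F]_(2^k, Nlen k),
  exists rec : ('I_k.+2 -> 'cV[F]_(2^k)) -> 'cV[F]_(Nlen k),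
  forall f, rec (fun l => if l == sysn i then 0 else S l *m node_content A f l)
            = node_content A f (sysn i).
Proof.
pose T := fun (D : 'I_k.+2 -> 'I_(2^k) -> F) (q : 'I_(2^k)) => D p1 q - \sum_(l < k) D (sysn l) q.
pose W D q := D p2 q - \sum_l xe a b l (sr0 i q) * D (sysn l) q.
pose x0 q := xe a b i (sr0 i q). pose x1 q := xe a b i (sr1 i q).
refine (@gen_repair F k _ _ A (sysn i) (sr0 i) (sr1 i) (fun _ _ => 1) (fun _ _ => 1)
  (fun D q => (W D q - x1 q * T D q) / (x0 q - x1 q))
  (fun D q => (x0 q * T D q - W D q) / (x0 q - x1 q)) _ _).
- move=> r; have [q [hq [e|e]]] := @ins_cover k (k - i) r (leq_subr i k) (ltn_ord r).
    by exists (Ordinal hq); left; apply: val_inj.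
  by exists (Ordinal hq); right; apply: val_inj.
- move=> f D q HD.
  have hsame : forall l, l != i -> xe a b l (sr1 i q) = xe a b l (sr0 i q).
    move=> l hl; rewrite /xe /=.
    have hli : (k - l != k - i)%N.
      by move: hl; rewrite -val_eqE /=; have := ltn_ord l; have := ltn_ord i; lia.
    have h0 : (0 != k - i)%N by have := ltn_ord i; lia.
    by rewrite !ins_bit.
  have hdiff : x0 q - x1 q != 0.
    have h0 : (0 != k - i)%N by have := ltn_ord i; lia.
    rewrite /x0 /x1 /xe /sr0 /sr1 /= (@ins_bit 1 (k - i)%N q 0 isT h0) !ins_bitp //= /sg.
    have -> : forall u v : F, (u * 1 + v + 1) - (u * -1 + v + 1) = 2 * u.
      by move=> u v; ring.
    by rewrite mulf_neq0.
  have ET : T D q = f i (sr0 i q) 0 + f i (sr1 i q) 0.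
    rewrite /T HD p1_sysn ncE_p1 ncE_p1 !mul1r -big_split /=.
    rewrite (@sum_diff _ _ i).
      by rewrite HD eqxx subr0.
    by move=> l hl; rewrite HD sysn_eq (negbTE hl) !ncE_sys !mul1r.
  have EW : W D q = x0 q * f i (sr0 i q) 0 + x1 q * f i (sr1 i q) 0.
    rewrite /W HD p2_sysn ncE_p2 ncE_p2 !mul1r -big_split /=.
    rewrite (@sum_diff _ _ i).
      by rewrite HD eqxx mulr0 subr0.
    move=> l hl; rewrite HD sysn_eq (negbTE hl) !ncE_sys !mul1r hsame //.
    by rewrite mulrDr.
  rewrite ncE_sys ncE_sys ET EW; split; field; exact: hdiff.
Qed.

Lemma lt_sk (q : nat) : (q < 2^k)%N -> (q < 2^k.+1)%N.
Proof. rewrite expnS; lia. Qed.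
Definition pr0 (q : 'I_(2^k)) : 'I_(Nlen k) := Ordinal (@lt_sk q (ltn_ord q)).
Definition pr1 (q : 'I_(2^k)) : 'I_(Nlen k) := Ordinal (cp1_lt k q).
Definition pr2 (q : 'I_(2^k)) : 'I_(Nlen k) := Ordinal (cp2_lt k q).

Lemma rep_p1 : exists S : 'I_k.+2 -> 'M[F]_(2^k, Nlen k),
  exists rec : ('I_k.+2 -> 'cV[F]_(2^k)) -> 'cV[F]_(Nlen k),
  forall f, rec (fun l => if l == p1 then 0 else S l *m node_content A f l)
            = node_content A f p1.
Proof.
refine (@gen_repair F k _ _ A p1 pr0 pr1 (fun _ _ => 1)
  (fun l _ => if l == p2 then 1 else -1)
  (fun D q => D p2 q / 2 + \sum_(l < k) (1 - xe a b l (pr0 q) / 2) * D (sysn l) q)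
  (fun D q => D p2 q / 2 - \sum_(l < k) (xe a b l (pr0 q) / 2) * D (sysn l) q) _ _).
- move=> r; have [q [hq [e|e]]] := @cp1_cover k r (ltn_ord r).
    by exists (Ordinal hq); left; apply: val_inj.
  by exists (Ordinal hq); right; apply: val_inj.
- move=> f D q HD.
  have hflip : forall l, xe a b l (pr1 q) = 2 - xe a b l (pr0 q).
    move=> l; rewrite /xe /pr1 /pr0 /= !cp1_bit ?lt_sk ?leq_subr // !sg_neg; ring.
  have Ep2 : D p2 q = \sum_l (xe a b l (pr0 q) * f l (pr0 q) 0 + xe a b l (pr1 q) * f l (pr1 q) 0).
    by rewrite HD p2_p1 eqxx !mul1r ncE_p2 ncE_p2 -big_split.
  have Es : forall l, D (sysn l) q = f l (pr0 q) 0 - f l (pr1 q) 0.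
    by move=> l; rewrite HD sysn_p1 sysn_p2 !ncE_sys mul1r mulN1r.
  rewrite !ncE_p1 Ep2 mulr_suml; split.
    rewrite -big_split; apply: eq_bigr => l _ /=; rewrite Es hflip; field; exact: h2.
  rewrite -sumrB; apply: eq_bigr => l _ /=; rewrite Es hflip; field; exact: h2.
Qed.

Lemma sg2 s : sg F s ^+ 2 = 1.
Proof. by case: s; rewrite /sg /= ?sqrrN expr1n. Qed.

Lemma rel2 i s t :
  (a i * sg F s + b i * sg F t + 1) * (a i * sg F (~~ s) + b i * sg F t + 1)
  = (a i * sg F s + b i * sg F t + 1) + (a i * sg F (~~ s) + b i * sg F t + 1).
Proof.
apply/eqP; rewrite -subr_eq0 sg_neg; apply/eqP.
transitivity (b i ^+ 2 * sg F t ^+ 2 - a i ^+ 2 * sg F s ^+ 2 - 1); first ring.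
by rewrite !sg2 !mulr1 -(opprB (a i ^+ 2)) hab opprK subrr.
Qed.

Lemma rep_p2 : exists S : 'I_k.+2 -> 'M[F]_(2^k, Nlen k),
  exists rec : ('I_k.+2 -> 'cV[F]_(2^k)) -> 'cV[F]_(Nlen k),
  forall f, rec (fun l => if l == p2 then 0 else S l *m node_content A f l)
            = node_content A f p2.
Proof.
refine (@gen_repair F k _ _ A p2 pr0 pr2
  (fun l q => sel l (fun m => xe a b m (pr0 q)) 1)
  (fun l q => sel l (fun m => - xe a b m (pr2 q)) 1)
  (fun D q => D p1 q + \sum_(l < k) (1 - (xe a b l (pr0 q))^-1) * D (sysn l) q)
  (fun D q => D p1 q - \sum_(l < k) (xe a b l (pr0 q))^-1 * D (sysn l) q) _ _).
- move=> r; have [q [hq [e|e]]] := @cp2_cover k r hk (ltn_ord r).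
    by exists (Ordinal hq); left; apply: val_inj.
  by exists (Ordinal hq); right; apply: val_inj.
- move=> f D q HD.
  have hrel : forall l, xe a b l (pr0 q) * xe a b l (pr2 q) = xe a b l (pr0 q) + xe a b l (pr2 q).
    move=> l; rewrite /xe /pr2 /pr0 /= cp2_bit0 cp2_bit ?lt_sk //; first exact: rel2.
    by have := ltn_ord l; lia.
  have Ep1 : D p1 q = \sum_l (f l (pr0 q) 0 + f l (pr2 q) 0).
    by rewrite HD p1_p2 !sel_p1 !mul1r ncE_p1 ncE_p1 -big_split.
  have Es : forall l, D (sysn l) q = xe a b l (pr0 q) * f l (pr0 q) 0 - xe a b l (pr2 q) * f l (pr2 q) 0.
    by move=> l; rewrite HD sysn_p2 !sel_sys !ncE_sys mulNr.
  rewrite !ncE_p2 Ep1; split.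
    rewrite -big_split; apply: eq_bigr => l _ /=; rewrite Es.
    set X0 := xe a b l (pr0 q); set X1 := xe a b l (pr2 q).
    set f0 := f l (pr0 q) 0; set f1 := f l (pr2 q) 0.
    have hz1 : X0 * X0^-1 = 1 by rewrite mulfV ?hx.
    have hz2 : X1 * X0^-1 = X1 - 1.
      have := hrel l; rewrite -/X0 -/X1 => e.
      apply: (mulIf (hx l (pr0 q))); rewrite -/X0 -mulrA mulVf ?hx // mulr1 mulrBl mul1r.
      by rewrite [X1 * X0]mulrC e [X0 + X1]addrC addrK.
    transitivity (X0 * f0 + f0 * (1 - X0 * X0^-1) + f1 * (1 - X1 + X1 * X0^-1)); first ring.
    by rewrite hz1 hz2; ring.
  rewrite -sumrB; apply: eq_bigr => l _ /=; rewrite Es.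
  set X0 := xe a b l (pr0 q); set X1 := xe a b l (pr2 q).
  set f0 := f l (pr0 q) 0; set f1 := f l (pr2 q) 0.
  have hz1 : X0 * X0^-1 = 1 by rewrite mulfV ?hx.
  have hz2 : X1 * X0^-1 = X1 - 1.
    have := hrel l; rewrite -/X0 -/X1 => e.
    apply: (mulIf (hx l (pr0 q))); rewrite -/X0 -mulrA mulVf ?hx // mulr1 mulrBl mul1r.
    by rewrite [X1 * X0]mulrC e [X0 + X1]addrC addrK.
  transitivity (f0 * (1 - X0 * X0^-1) + f1 * (1 + X1 * X0^-1)); first ring.
  by rewrite hz1 hz2; ring.
Qed.

Lemma repair : repairable_with (2 ^ k) (Acode a b).
Proof.
move=> j; case: (nodeP j) => [[l ->] | [-> | ->]].
- exact: rep_sys.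
- exact: rep_p1.
- exact: rep_p2.
Qed.
End Rep.

End Mt7.
Import Mt7.

Module Mt8.
Import Order.TTheory GRing.Theory.
Local Open Scope ring_scope.

Section Param.
Variables (F : fieldType) (k : nat) (u : 'I_k -> F).
Hypothesis h2 : (2 : F) != 0.
Hypothesis hu0 : forall i, u i != 0.
Hypothesis hu1 : forall i, u i != 1.
Hypothesis hum1 : forall i, u i != -1.
Hypothesis hij : forall i j, i != j -> u i != u j.
Hypothesis hij2 : forall i j, i != j -> u i * u j != 1.

Definition pa i := (u i - (u i)^-1) / 2.
Definition pb i := (u i + (u i)^-1) / 2.

Lemma ab_sg i s t : pa i * sg F s + pb i * sg F t = sg F t * (if s == t then u i else (u i)^-1).
Proof.
have h := hu0 i; rewrite /pa /pb /sg.
by case: s; case: t; rewrite /=; field; rewrite ?h ?h2.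
Qed.

Lemma hab_p i : pa i ^+ 2 - pb i ^+ 2 = -1.
Proof. have h := hu0 i; rewrite /pa /pb; field; by rewrite ?h ?h2. Qed.

Lemma uinv_ne1 i : (u i)^-1 != 1.
Proof. by rewrite invr_eq1 hu1. Qed.
Lemma uinv_nem1 i : (u i)^-1 != -1.
Proof. by rewrite -invrN1 (inj_eq (@invr_inj _)) hum1. Qed.

Lemma ha_p i : pa i != 0.
Proof.
rewrite /pa mulf_eq0 invr_eq0 negb_or h2 andbT subr_eq0.
apply/eqP => e.
have : u i * u i = 1 by rewrite {2}e mulfV ?hu0.
move/eqP; rewrite -subr_eq0 (_ : u i * u i - 1 = (u i - 1) * (u i + 1)); last by ring.
by rewrite mulf_eq0 subr_eq0 (negbTE (hu1 i)) /= addr_eq0 (negbTE (hum1 i)).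
Qed.

Lemma sg_neq0 t : sg F t != 0.
Proof. by case: t; rewrite /sg ?oppr_eq0 oner_eq0. Qed.

Lemma hx_p i (r : nat) : xe pa pb i r != 0.
Proof.
rewrite /xe ab_sg.
have hw : forall w, w != 1 -> w != -1 -> sg F (bit r 0) * w + 1 != 0.
  move=> w h1 hm1; case: (bit r 0); rewrite /sg ?mul1r ?mulN1r.
    by rewrite addrC subr_eq0 eq_sym.
  by rewrite addr_eq0.
by case: (bit r (k - i)%N == bit r 0); apply: hw; rewrite ?hu1 ?hum1 ?uinv_ne1 ?uinv_nem1.
Qed.

Lemma hd_p i j (r : nat) : i != j -> xe pa pb i r != xe pa pb j r.
Proof.
move=> hne; rewrite /xe !ab_sg; apply/eqP => /addIr /(mulfI (sg_neq0 _)).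
case: (bit r (k - i)%N == bit r 0); case: (bit r (k - j)%N == bit r 0) => /= e.
- by move/eqP: (hij _ _ hne); rewrite e.
- by move/eqP: (hij2 _ _ hne); rewrite e mulVf ?hu0.
- by move/eqP: (hij2 _ _ hne); rewrite -e mulfV ?hu0.
- by move/eqP: (hij _ _ hne); rewrite (invr_inj e).
Qed.
End Param.

End Mt8.
Import Mt8.

Module Mt9.
Import Order.TTheory GRing.Theory.
Local Open Scope ring_scope.
Lemma Fp_neq p m n : prime p -> (m < p)%N -> (n < p)%N -> (m != n)%N -> (m%:R : 'F_p) != n%:R.
Proof.
move=> pr hm hn hmn; apply/eqP => /(congr1 (fun x : 'F_p => nat_of_ord x)); rewrite /= !val_Fp_nat // !modn_small //.
exact/eqP.
Qed.


End Mt9.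
Import Mt9.

Local Open Scope ring_scope.

Theorem theorem1 (k : nat) : (1 <= k)%N ->
  exists F : finFieldType,
  (2 * k + 3 <= #|F|)%N /\
  exists a b : 'I_k -> F,
    (forall i, a i ^+ 2 - b i ^+ 2 = -1) /\
    is_MDS (Acode a b) /\
    repairable_with (2 ^ k) (Acode a b).
Proof.
move=> hk.
case: (prime_above ((k + 3) ^ 2)) => p hp pr.
rewrite -mulnn in hp.
exists 'F_p; split; first by rewrite card_Fp //; nia.
pose u : 'I_k -> 'F_p := fun i => (i + 2)%N%:R.
have h2 : (2 : 'F_p) != 0.
  by move: (@Fp_neq p 2 0 pr ltac:(nia) ltac:(nia) isT); rewrite mulr0n.
have hu0 : forall i, u i != 0.
  move=> i; have := ltn_ord i => hi.
  by move: (@Fp_neq p (i + 2) 0 pr ltac:(nia) ltac:(nia) ltac:(lia)); rewrite mulr0n.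
have hu1 : forall i, u i != 1.
  move=> i; have := ltn_ord i => hi.
  by move: (@Fp_neq p (i + 2) 1 pr ltac:(nia) ltac:(nia) ltac:(lia)); rewrite mulr1n.
have hum1 : forall i, u i != -1.
  move=> i; have := ltn_ord i => hi.
  rewrite -addr_eq0 /u natr1.
  by move: (@Fp_neq p (i + 2).+1 0 pr ltac:(nia) ltac:(nia) ltac:(lia)); rewrite mulr0n.
have hij : forall i j, i != j -> u i != u j.
  move=> i j hne; have := ltn_ord i; have := ltn_ord j => hj hi.
  apply: Fp_neq => //; try nia.
  by move: hne; rewrite -val_eqE /=; lia.
have hij2 : forall i j, i != j -> u i * u j != 1.
  move=> i j hne; have := ltn_ord i; have := ltn_ord j => hj hi.
  rewrite /u -natrM.
  by move: (@Fp_neq p ((i + 2) * (j + 2)) 1 pr ltac:(nia) ltac:(nia) ltac:(nia)); rewrite mulr1n.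
exists (@pa _ _ u), (@pb _ _ u); split; first exact: hab_p.
split.
  apply: mds; [exact: hx_p | exact: hd_p].
apply: repair => //; [exact: hab_p | exact: ha_p | exact: hx_p].
Qed.
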